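(* Let $X,Y\in\mathbb{R}^{n\times n}$ and define $L:\mathbb{R}^{n\times n}\to\mathbb{R}^{n\times n}$ by $L(A)=XAY$. Then $L$ maps every minimally semipositive $n\times n$ matrix to a minimally semipositive matrix if and only if either both $X$ and $Y$ are inverse nonnegative, or both $-X$ and $-Y$ are inverse nonnegative.
   Context: For a matrix or vector, $\geq 0$ means entrywise nonnegative and $>0$ entrywise positive. A matrix $A\in\mathbb{R}^{m\times n}$ is semipositive if there exists $x\in\mathbb{R}^n$ with $x\geq 0$ and $Ax>0$. $A$ is minimally semipositive if it is semipositive and no submatrix obtained from $A$ by deleting one or more columns is semipositive. A square matrix $A$ is inverse nonnegative if $A$ is invertible and $A^{-1}\geq 0$. *)

(* Defs.v *)
From HB Require Import structures.
From mathcomp Require Import all_boot all_order all_algebra.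
Set Implicit Arguments. Unset Strict Implicit. Unset Printing Implicit Defensive.
Import Order.TTheory GRing.Theory Num.Theory.
Local Open Scope ring_scope.

Definition mx_nonneg (R : realFieldType) m n (A : 'M[R]_(m, n)) : Prop :=
  forall i j, 0 <= A i j.
Definition mx_pos (R : realFieldType) m n (A : 'M[R]_(m, n)) : Prop :=
  forall i j, 0 < A i j.

Definition semipositive (R : realFieldType) m n (A : 'M[R]_(m, n)) : Prop :=
  exists x : 'cV[R]_n, mx_nonneg x /\ mx_pos (A *m x).

(* submatrix of A keeping exactly the columns in S (in increasing order) *)
Definition col_submx (R : realFieldType) m n (A : 'M[R]_(m, n))
  (S : {set 'I_n}) : 'M[R]_(m, #|S|) :=
  colsub (fun k : 'I_#|S| => enum_val k) A.

Definition min_semipositive (R : realFieldType) m n (A : 'M[R]_(m, n)) : Prop :=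
  semipositive A /\
  forall S : {set 'I_n}, S != setT -> ~ semipositive (col_submx A S).

Definition inv_nonneg (R : realFieldType) n (A : 'M[R]_n) : Prop :=
  A \in unitmx /\ mx_nonneg (invmx A).

(* Main.v *)
Require Import Defs.
From HB Require Import structures.
From mathcomp Require Import all_boot all_order all_algebra.
From mathcomp Require Import ring lra.
Import Order.TTheory GRing.Theory Num.Theory.
Local Open Scope ring_scope.
Set Implicit Arguments. Unset Strict Implicit. Unset Printing Implicit Defensive.

Section S.
Variable R : realFieldType.

Lemma push n (x d : 'cV[R]_n) : (forall i, 0 < x i 0) -> (exists k, d k 0 < 0) ->
  exists t, 0 <= t /\ mx_nonneg (x + t *: d) /\ exists k, (x + t *: d) k 0 = 0.
Proof.
move=> xp [k0 dk0].
pose f l := x l 0 / - d l 0.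
case: (@arg_minP _ _ _ k0 (fun l => d l 0 < 0) f dk0) => l dl Hl.
have ndl : 0 < - d l 0 by rewrite oppr_gt0.
have t0 : 0 <= f l by rewrite /f divr_ge0 // ltW.
exists (f l); split => //; split.
  move=> i j; rewrite (ord1 j) !mxE.
  have [di|di] := ltP (d i 0) 0.
    have := Hl i di; rewrite /f => H.
    have ndi : 0 < - d i 0 by rewrite oppr_gt0.
    rewrite ler_pdivlMr // in H.
    by rewrite -(opprK (d i 0)) mulrN subr_ge0.
  by apply: addr_ge0; [exact: ltW | exact: mulr_ge0].
exists l; rewrite !mxE /f.
by rewrite invrN mulrN mulNr divfK ?subrr // -oppr_eq0 gt_eqF.
Qed.
Lemma sp_of_support m n (A : 'M[R]_(m,n)) (S : {set 'I_n}) (w : 'cV[R]_n) :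
  mx_nonneg w -> mx_pos (A *m w) -> (forall k, k \notin S -> w k 0 = 0) ->
  semipositive (col_submx A S).
Proof.
move=> wn wp wS; exists (\col_i w (enum_val i) 0); split.
  by move=> i j; rewrite mxE.
move=> i j; rewrite (ord1 j); have := wp i 0; rewrite !mxE.
rewrite (bigID (fun k => k \in S)) /= [X in _ + X]big1 ?addr0; last first.
  by move=> k /wS ->; rewrite mulr0.
rewrite (big_enum_val (fun k => A i k * w k 0)).
by under eq_bigr do rewrite !mxE.
Qed.

Lemma support_of_sp m n (A : 'M[R]_(m,n)) (S : {set 'I_n}) :
  semipositive (col_submx A S) ->
  exists w : 'cV[R]_n, mx_nonneg w /\ mx_pos (A *m w) /\ (forall k, k \notin S -> w k 0 = 0).
Proof.
case=> x [xn xp]; exists (\col_k \sum_(i | enum_val i == k) x i 0); split; [|split].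
- by move=> k j; rewrite mxE sumr_ge0.
- move=> r j; rewrite (ord1 j); have := xp r 0; rewrite !mxE.
  under [X in _ -> _ < X]eq_bigr do rewrite mxE mulr_sumr big_mkcond /=.
  rewrite exchange_big /=.
  congr (_ < _); apply: eq_bigr => i _.
  rewrite (bigD1 (enum_val i)) //= eqxx big1 ?addr0 ?mxE //.
  by move=> k /negPf; rewrite eq_sym => ->.
- move=> k kS; rewrite mxE big1 // => i /eqP ei.
  by move: kS; rewrite -ei enum_valP.
Qed.
Lemma msp_pos m n (A : 'M[R]_(m,n)) (x : 'cV[R]_n) : min_semipositive A ->
  mx_nonneg x -> mx_pos (A *m x) -> forall k, 0 < x k 0.
Proof.
move=> [_ H] xn xp k; rewrite lt_neqAle xn andbT; apply/negP => /eqP x0.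
apply: (H [set k' | x k' 0 != 0]).
  by apply/eqP => /setP /(_ k); rewrite !inE -x0 eqxx.
apply: sp_of_support xn xp _ => k'; rewrite inE negbK => /eqP //.
Qed.

Lemma row_nz n (M : 'M[R]_n) : M \in unitmx -> forall a, exists d, M a d != 0.
Proof.
move=> U a; case/boolP: [exists d, M a d != 0] => [/existsP//|].
rewrite negb_exists => /forallP H.
have := mulmxV U; move/matrixP/(_ a a); rewrite !mxE eqxx big1 //.
  by move/eqP; rewrite eq_sym oner_eq0.
by move=> d _; move: (H d); rewrite negbK => /eqP ->; rewrite mul0r.
Qed.

Lemma nn_mul m n p (A : 'M[R]_(m,n)) (B : 'M[R]_(n,p)) :
  mx_nonneg A -> mx_nonneg B -> mx_nonneg (A *m B).
Proof. by move=> HA HB i j; rewrite mxE sumr_ge0 // => k _; rewrite mulr_ge0. Qed.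

Lemma inv_nonneg_msp n (A : 'M[R]_n) : inv_nonneg A -> min_semipositive A.
Proof.
move=> [U N]; split.
  exists (invmx A *m const_mx 1); split.
    by apply: nn_mul => // i j; rewrite mxE.
  by move=> i j; rewrite mulmxA mulmxV // mul1mx mxE ltr01.
move=> S SnT /support_of_sp [w [wn [wp wS]]].
case/boolP: [exists k, k \notin S]; last first.
  rewrite negb_exists => /forallP H; move/eqP: SnT; apply.
  by apply/setP => k; rewrite inE; move: (H k); rewrite negbK.
case/existsP => k kS; move: (wS k kS).
have -> : w = invmx A *m (A *m w) by rewrite mulmxA mulVmx ?mul1mx.
have Ui : invmx A \in unitmx by rewrite unitmx_inv.
rewrite mxE; have [j0 nz] := row_nz Ui k.
move=> /eqP; apply/negP; rewrite gt_eqF //.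
rewrite (bigD1 j0) //=.
have h1 : 0 <= \sum_(i < n | i != j0) invmx A k i * (A *m w) i 0.
  by rewrite sumr_ge0 // => i _; rewrite mulr_ge0 // ltW.
have h2 : 0 < invmx A k j0 * (A *m w) j0 0.
  by rewrite mulr_gt0 // lt_neqAle eq_sym nz N.
lra.
Qed.
Lemma msp_inv_nonneg n (A : 'M[R]_n) : min_semipositive A -> inv_nonneg A.
Proof.
move=> msp; have msp' := msp; case: msp' => [[x [xn xp]] _].
have xpos := msp_pos msp xn xp.
have key : forall d : 'cV[R]_n, (exists k, d k 0 < 0) ->
    (forall t, 0 <= t -> mx_pos (A *m (x + t *: d))) -> False.
  move=> d dk Hd; have [t [t0 [nn [k k0]]]] := push xpos dk.
  by have := msp_pos msp nn (Hd t t0) k; rewrite k0 ltxx.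
have U : A \in unitmx.
  apply/negPn/negP => nU.
  have : kermx A^T != 0 by rewrite kermx_eq0 row_free_unit unitmx_tr.
  set K := kermx A^T => Knz.
  case/boolP: [exists i, exists j, K i j != 0]; last first.
    rewrite negb_exists => /forallP H; move/eqP: Knz; apply.
    apply/matrixP => i j; move: (H i); rewrite negb_exists => /forallP /(_ j).
    by move/negPn/eqP => ->; rewrite mxE.
  case/existsP => i /existsP [j Kij].
  pose z := (row i K)^T.
  have Az : A *m z = 0.
    by rewrite /z -[A]trmxK -trmx_mul -row_mul mulmx_ker row0 trmx0.
  have zj : z j 0 = K i j by rewrite !mxE.
  pose d := if 0 < z j 0 then - z else z.
  apply: (key d).
    exists j; rewrite /d; case: ifP => h; first by rewrite mxE oppr_lt0.
    by rewrite lt_neqAle leNgt h zj Kij.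
  have Ad : A *m d = 0 by rewrite /d; case: ifP; rewrite ?mulmxN Az ?oppr0.
  by move=> t _; rewrite mulmxDr -scalemxAr Ad scaler0 addr0.
split => // k j; rewrite leNgt; apply/negP => neg.
pose d := col j (invmx A).
apply: (key d); first by exists k; rewrite mxE.
move=> t t0 r c; rewrite (ord1 c).
rewrite mulmxDr -scalemxAr /d colE mulmxA mulmxV // mul1mx !mxE.
have h1 := xp r 0; have h2 : 0 <= ((r == j) && true)%:R :> R by rewrite ler0n.
have h3 := mulr_ge0 t0 h2.
rewrite mxE in h1; lra.
Qed.
Lemma invmxM n (P Q : 'M[R]_n) : P \in unitmx -> Q \in unitmx ->
  invmx (P *m Q) = invmx Q *m invmx P.
Proof.
move=> UP UQ; have UPQ : P *m Q \in unitmx by rewrite unitmx_mul UP UQ.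
have e : (P *m Q) *m (invmx Q *m invmx P) = 1%:M.
  by rewrite mulmxA -(mulmxA P) mulmxV // mulmx1 mulmxV.
by rewrite -[LHS]mulmx1 -e mulmxA mulVmx ?mul1mx.
Qed.

Lemma inv_nonneg1 n : inv_nonneg (1%:M : 'M[R]_n).
Proof. by split; rewrite ?unitmx1 // invmx1 => i j; rewrite mxE ler0n. Qed.

Lemma lim_ge0 (p q : R) : (forall t, 0 < t -> 0 <= p + t * q) -> 0 <= q.
Proof.
move=> H; rewrite leNgt; apply/negP => qn.
have tp : 0 < (`|p| + 1) / (- q).
  by rewrite divr_gt0 ?oppr_gt0 // ltr_wpDl.
have := H _ tp.
have -> : (`|p| + 1) / (- q) * q = - (`|p| + 1).
  by field; rewrite lt_eqF.
have := ler_norm p; lra.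
Qed.

Lemma invmxN n (X : 'M[R]_n) : X \in unitmx -> (- X \in unitmx) /\ invmx (- X) = - invmx X.
Proof.
move=> U; have u1 : (-1 : R) \is a GRing.unit by rewrite unitrN unitr1.
have UN : (-1) *: X \in unitmx by rewrite unitmxZ.
by rewrite -scaleN1r; split => //; rewrite invmxZ // invrN1 scaleN1r.
Qed.

Lemma pos_case n (X Y A : 'M[R]_n) : inv_nonneg X -> inv_nonneg Y ->
  inv_nonneg A -> inv_nonneg (X *m A *m Y).
Proof.
move=> [UX NX] [UY NY] [UA NA].
have UXA : X *m A \in unitmx by rewrite unitmx_mul UX UA.
split; first by rewrite unitmx_mul UXA UY.
by rewrite invmxM // invmxM //; apply: nn_mul => //; apply: nn_mul.
Qed.
Lemma prod_ge0 n (X Y : 'M[R]_n) :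
  (forall A, min_semipositive A -> min_semipositive (X *m A *m Y)) ->
  [/\ X \in unitmx, Y \in unitmx & forall a b c d, 0 <= invmx Y a b * invmx X c d].
Proof.
move=> H.
have [U1 _] := msp_inv_nonneg (H _ (inv_nonneg_msp (inv_nonneg1 n))).
move: U1; rewrite mulmx1 unitmx_mul => /andP [UX UY].
split => // a b c d.
pose E := delta_mx b c : 'M[R]_n.
apply: (@lim_ge0 ((invmx Y *m invmx X) a d)) => t tp.
pose B := 1%:M + t *: E.
pose s := t / (1 + t * (c == b)%:R).
have BC : B *m (1%:M - s *: E) = 1%:M.
  rewrite /B mulmxDl mul1mx mulmxBr mulmx1 -scalemxAl -scalemxAr /E.
  rewrite mul_delta_mx_cond -scaler_nat !scalerA -scalerBl -scaleNr -addrA -scalerDl.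
  have -> : - s + (t - t * (s * (c == b)%:R)) = 0.
    have h : 0 <= (c == b)%:R :> R by rewrite ler0n.
    rewrite /s; field; apply: lt0r_neq0; have := mulr_ge0 (ltW tp) h; lra.
  by rewrite scale0r addr0.
have UB : B \in unitmx by case: (mulmx1_unit BC).
have NB : mx_nonneg B.
  move=> i j; rewrite !mxE; apply: addr_ge0; first by rewrite ler0n.
  by apply: mulr_ge0; rewrite ?ler0n // ltW.
have IA : inv_nonneg (invmx B) by split; [rewrite unitmx_inv | rewrite invmxK].
have [_ N] := msp_inv_nonneg (H _ (inv_nonneg_msp IA)).
have UXB : X *m invmx B \in unitmx by rewrite unitmx_mul UX unitmx_inv.
move: (N a d); rewrite invmxM // invmxM ?unitmx_inv // invmxK.
rewrite /B mulmxDl mul1mx mulmxDr -scalemxAl -scalemxAr.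
have -> : invmx Y *m (E *m invmx X) = col b (invmx Y) *m row c (invmx X).
  by rewrite colE rowE /E -(mul_delta_mx (0:'I_1) b c) !mulmxA.
by rewrite !mxE big_ord1 !mxE.
Qed.
End S.
Unset Implicit Arguments.

Theorem mainTheorem6 (R : realFieldType) (n : nat) (X Y : 'M[R]_n) :
  (forall A : 'M[R]_n, min_semipositive A -> min_semipositive (X *m A *m Y))
  <-> (inv_nonneg X /\ inv_nonneg Y) \/ (inv_nonneg (- X) /\ inv_nonneg (- Y)).
Proof.
split.
- move=> H; have [UX UY P] := prod_ge0 H.
  have UXi : invmx X \in unitmx by rewrite unitmx_inv.
  have UYi : invmx Y \in unitmx by rewrite unitmx_inv.
  have rX := row_nz UXi; have rY := row_nz UYi.
  case/boolP: [forall c, forall d, 0 <= invmx X c d] => hX.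
    have hX' : mx_nonneg (invmx X).
      by move=> c d; move/forallP: hX => /(_ c) /forallP; apply.
    left; split; split => // a b.
    have [d nz] := rX a.
    have pos : 0 < invmx X a d by rewrite lt_neqAle eq_sym nz hX'.
    by have := P a b a d; rewrite pmulr_lge0.
  move: hX; rewrite negb_forall => /existsP [c]; rewrite negb_forall => /existsP [d].
  rewrite -ltNge => neg.
  have hY : forall a b, invmx Y a b <= 0.
    by move=> a b; have := P a b c d; rewrite nmulr_lge0.
  have hX : forall c' d', invmx X c' d' <= 0.
    move=> c' d'; have [b nz] := rY c'.
    have ng : invmx Y c' b < 0 by rewrite lt_neqAle nz hY.
    by have := P c' b c' d'; rewrite nmulr_rge0.
  have [UNX IX] := invmxN UX; have [UNY IY] := invmxN UY.
  right; split; split => // i j; rewrite ?IX ?IY mxE oppr_ge0 //.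
- case => [[hX hY]|[hX hY]] A mA; apply: inv_nonneg_msp.
    exact: pos_case hX hY (msp_inv_nonneg mA).
  have -> : X *m A *m Y = (- X) *m A *m (- Y).
    by rewrite mulmxN !mulNmx opprK.
  exact: pos_case hX hY (msp_inv_nonneg mA).
Qed.
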